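(* Every $4$-dimensional Acaa-algebra over a field $\mathbb K$ of characteristic $0$ is isomorphic to one of the following: (1) the $4$-dimensional abelian algebra; (2) the $4$-dimensional $2$-step nilpotent Lie algebra $\mathcal H_3\oplus\mathbb K$, given in a basis $\{e_1,e_2,e_3,e_4\}$ by $[e_1,e_2]=e_3$ and all other brackets of basis vectors (not determined by anticommutativity) zero.
   Context: An Acaa-algebra over a field $\mathbb K$ of characteristic $0$ is a $\mathbb K$-vector space $A$ with a bilinear product $[\cdot,\cdot]$ which is anticommutative, $[x,y]=-[y,x]$, and satisfies $[x_1,[x_2,x_3]]=[x_2,[x_3,x_1]]$ for all $x_1,x_2,x_3\in A$. Isomorphism means a linear bijection preserving the bracket. *)

(* Defs.v *)
From HB Require Import structures.
From mathcomp Require Import all_boot all_order all_algebra.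
Set Implicit Arguments. Unset Strict Implicit. Unset Printing Implicit Defensive.
Import GRing.Theory.
Local Open Scope ring_scope.

Definition is_acaa (K : fieldType) (V : lmodType K) (br : V -> V -> V) : Prop :=
  [/\ (forall (a : K) (x y z : V), br (a *: x + y) z = a *: br x z + br y z),
      (forall (a : K) (x y z : V), br z (a *: x + y) = a *: br z x + br z y),
      (forall x y : V, br x y = - br y x) &
      (forall x1 x2 x3 : V, br x1 (br x2 x3) = br x2 (br x3 x1))].

Definition acaa_iso (K : fieldType) (V W : lmodType K)
  (brV : V -> V -> V) (brW : W -> W -> W) : Prop :=
  exists f : V -> W,
    [/\ (forall (a : K) (x y : V), f (a *: x + y) = a *: f x + f y),
        bijective f &
        (forall x y : V, f (brV x y) = brW (f x) (f y))].

Definition abelian4_br (K : fieldType) (x y : 'rV[K]_4) : 'rV[K]_4 := 0.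

(* H_3 (+) K on K^4 with basis e1..e4 = standard basis (indices 0..3):
   [e1,e2] = e3, all other brackets of basis vectors zero (up to antisymmetry).
   Bilinear extension: [x,y] = (x1 y2 - x2 y1) e3. *)
Definition heis4_br (K : fieldType) (x y : 'rV[K]_4) : 'rV[K]_4 :=
  \row_(k < 4) (if (k : nat) == 2%N
                then x 0 (inord 0) * y 0 (inord 1) - x 0 (inord 1) * y 0 (inord 0)
                else 0).

(* Main.v *)
Require Import Defs.
From HB Require Import structures.
From mathcomp Require Import all_boot all_order all_algebra.
From Stdlib Require Import Classical.
Set Implicit Arguments. Unset Strict Implicit. Unset Printing Implicit Defensive.
Import GRing.Theory.
Local Open Scope ring_scope.

Lemma br0l (K : fieldType) (V : lmodType K) (br : V -> V -> V) :
  is_acaa br -> forall z, br 0 z = 0.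
Proof.
case=> Hl _ _ _ z; have := Hl 1 0 0 z; rewrite !scale1r addr0 => H.
by apply: (@addrI _ (br 0 z)); rewrite addr0 -H.
Qed.
Lemma br0r (K : fieldType) (V : lmodType K) (br : V -> V -> V) :
  is_acaa br -> forall z, br z 0 = 0.
Proof.
case=> _ Hr _ _ z; have := Hr 1 0 0 z; rewrite !scale1r addr0 => H.
by apply: (@addrI _ (br z 0)); rewrite addr0 -H.
Qed.
Lemma brDl (K : fieldType) (V : lmodType K) (br : V -> V -> V) :
  is_acaa br -> forall x y z, br (x + y) z = br x z + br y z.
Proof. by case=> Hl _ _ _ x y z; have := Hl 1 x y z; rewrite !scale1r. Qed.
Lemma brDr (K : fieldType) (V : lmodType K) (br : V -> V -> V) :
  is_acaa br -> forall x y z, br z (x + y) = br z x + br z y.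
Proof. by case=> _ Hr _ _ x y z; have := Hr 1 x y z; rewrite !scale1r. Qed.
Lemma brZl (K : fieldType) (V : lmodType K) (br : V -> V -> V) :
  is_acaa br -> forall a x z, br (a *: x) z = a *: br x z.
Proof.
move=> H a x z; have [Hl _ _ _] := H; have := Hl a x 0 z.
by rewrite (br0l H) !addr0.
Qed.
Lemma brZr (K : fieldType) (V : lmodType K) (br : V -> V -> V) :
  is_acaa br -> forall a x z, br z (a *: x) = a *: br z x.
Proof.
move=> H a x z; have [_ Hr _ _] := H; have := Hr a x 0 z.
by rewrite (br0r H) !addr0.
Qed.
Lemma brNl (K : fieldType) (V : lmodType K) (br : V -> V -> V) :
  is_acaa br -> forall x z, br (- x) z = - br x z.
Proof. by move=> H x z; rewrite -scaleN1r (brZl H) scaleN1r. Qed.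
Lemma brNr (K : fieldType) (V : lmodType K) (br : V -> V -> V) :
  is_acaa br -> forall x z, br z (- x) = - br z x.
Proof. by move=> H x z; rewrite -scaleN1r (brZr H) scaleN1r. Qed.

Lemma two_neq0 (K : fieldType) : [pchar K] =i pred0 -> (2%:R : K) != 0.
Proof. by move=> h; have := h 2%N; rewrite !inE /= => ->. Qed.

Lemma half0 (K : fieldType) (V : lmodType K) (v : V) :
  [pchar K] =i pred0 -> v = - v -> v = 0.
Proof.
move=> hc h; have : (2%:R : K) *: v = 0 by rewrite scaler_nat mulr2n {1}h addNr.
by move/eqP; rewrite scaler_eq0 (negPf (two_neq0 hc)) => /eqP.
Qed.

Lemma brxx (K : fieldType) (V : lmodType K) (br : V -> V -> V) :
  [pchar K] =i pred0 -> is_acaa br -> forall x, br x x = 0.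
Proof. by move=> hc [_ _ A _] x; apply: half0 hc _; apply: A. Qed.

Lemma Tanti (K : fieldType) (V : lmodType K) (br : V -> V -> V) :
  is_acaa br -> forall a b c, br a (br b c) = - br b (br a c).
Proof.
move=> H a b c; have [_ _ A C] := H.
by rewrite C (A c a) (brNr H).
Qed.

Lemma Txxz (K : fieldType) (V : lmodType K) (br : V -> V -> V) :
  [pchar K] =i pred0 -> is_acaa br -> forall x z, br x (br x z) = 0.
Proof. by move=> hc H x z; apply: half0 hc _; apply: (Tanti H). Qed.

Lemma Txzz (K : fieldType) (V : lmodType K) (br : V -> V -> V) :
  [pchar K] =i pred0 -> is_acaa br -> forall x z, br x (br z z) = 0.
Proof. by move=> hc H x z; rewrite (brxx hc H) (br0r H). Qed.

Lemma Txzx (K : fieldType) (V : lmodType K) (br : V -> V -> V) :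
  [pchar K] =i pred0 -> is_acaa br -> forall x z, br x (br z x) = 0.
Proof.
move=> hc H x z; have [_ _ A _] := H.
by rewrite (A z x) (brNr H) (Txxz hc H) oppr0.
Qed.

Lemma Qpair (K : fieldType) (V : lmodType K) (br : V -> V -> V) :
  is_acaa br -> forall a b c d,
  br a (br b (br c d)) = br (br c d) (br a b).
Proof. by move=> H a b c d; have [_ _ A C] := H; rewrite C C. Qed.

Lemma Q0 (K : fieldType) (V : lmodType K) (br : V -> V -> V) :
  [pchar K] =i pred0 -> is_acaa br -> forall a b c d,
  br a (br b (br c d)) = 0.
Proof.
move=> hc H a b c d; have [_ _ A C] := H.
apply: half0 hc _.
have E1 : br a (br b (br c d)) = - br c (br d (br a b)).
  by rewrite Qpair // A -Qpair.
have E2 : br c (br d (br a b)) = br a (br b (br c d)).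
  rewrite (Tanti H c d) (C c a b) (Tanti H d a) opprK.
  by rewrite (C d b c).
by rewrite {1}E1 E2.
Qed.

Lemma free5 (K : fieldType) (V : vectType K) (a b c d e : V) :
  (forall k0 k1 k2 k3 k4 : K, k0 *: a + k1 *: b + k2 *: c + k3 *: d + k4 *: e = 0 ->
     [/\ k0 = 0, k1 = 0, k2 = 0, k3 = 0 & k4 = 0]) ->
  free [:: a; b; c; d; e].
Proof.
move=> H.
have : free [tuple a; b; c; d; e].
  apply/freeP => k; rewrite !big_ord_recl big_ord0 /= addr0 !addrA => /H.
  case=> h0 h1 h2 h3 h4 [[|[|[|[|[|n]]]]] Hi] //.
  - by rewrite -h0; congr k; apply: val_inj.
  - by rewrite -h1; congr k; apply: val_inj.
  - by rewrite -h2; congr k; apply: val_inj.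
  - by rewrite -h3; congr k; apply: val_inj.
  - by rewrite -h4; congr k; apply: val_inj.
by [].
Qed.

Lemma free4 (K : fieldType) (V : vectType K) (a b c d : V) :
  (forall k0 k1 k2 k3 : K, k0 *: a + k1 *: b + k2 *: c + k3 *: d = 0 ->
     [/\ k0 = 0, k1 = 0, k2 = 0 & k3 = 0]) ->
  free [:: a; b; c; d].
Proof.
move=> H.
have : free [tuple a; b; c; d].
  apply/freeP => k; rewrite !big_ord_recl big_ord0 /= addr0 !addrA => /H.
  case=> h0 h1 h2 h3 [[|[|[|[|n]]]] Hi] //.
  - by rewrite -h0; congr k; apply: val_inj.
  - by rewrite -h1; congr k; apply: val_inj.
  - by rewrite -h2; congr k; apply: val_inj.
  - by rewrite -h3; congr k; apply: val_inj.
by [].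
Qed.

Lemma free3 (K : fieldType) (V : vectType K) (a b c : V) :
  (forall k0 k1 k2 : K, k0 *: a + k1 *: b + k2 *: c = 0 ->
     [/\ k0 = 0, k1 = 0 & k2 = 0]) ->
  free [:: a; b; c].
Proof.
move=> H.
have : free [tuple a; b; c].
  apply/freeP => k; rewrite !big_ord_recl big_ord0 /= addr0 !addrA => /H.
  case=> h0 h1 h2 [[|[|[|n]]] Hi] //.
  - by rewrite -h0; congr k; apply: val_inj.
  - by rewrite -h1; congr k; apply: val_inj.
  - by rewrite -h2; congr k; apply: val_inj.
by [].
Qed.

Lemma free4P (K : fieldType) (V : vectType K) (a b c d : V) :
  free [:: a; b; c; d] ->
  forall k0 k1 k2 k3 : K, k0 *: a + k1 *: b + k2 *: c + k3 *: d = 0 ->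
     [/\ k0 = 0, k1 = 0, k2 = 0 & k3 = 0].
Proof.
move=> Hf k0 k1 k2 k3 E.
have Hf' : free [tuple a; b; c; d] by [].
pose k := fun i : 'I_4 => [:: k0; k1; k2; k3]`_i.
move/freeP: Hf' => /(_ k).
rewrite !big_ord_recl big_ord0 /= addr0 !addrA => /(_ E) hk.
by split; [apply: (hk 0) | apply: (hk 1) | apply: (hk 2) | apply: (hk 3)].
Qed.

Lemma free_dim_le (K : fieldType) (V : vectType K) (X : seq V) :
  free X -> (size X <= \dim (fullv : {vspace V}))%N.
Proof. by move=> /eqnP <-; apply: dimvS; apply: subvf. Qed.

Lemma ext_free (K : fieldType) (V : vectType K) (X : seq V) :
  free X -> (size X < \dim (fullv : {vspace V}))%N -> exists t, free (t :: X).
Proof.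
move=> fX lt.
have : ~~ (fullv <= <<X>>)%VS.
  apply/negP => /dimvS; rewrite (eqnP fX) => le.
  by move: (leq_trans lt le); rewrite ltnn.
have hb := vbasisP (fullv : {vspace V}).
case: (boolP (has (fun v => v \notin <<X>>%VS) (vbasis fullv))).
  move=> /hasP [t _ ht] _; exists t; by rewrite free_cons ht fX.
move=> /hasPn hn; case/negP; rewrite -(span_basis hb).
apply/span_subvP => v /hn; by rewrite negbK.
Qed.

Definition gmap (K : fieldType) (V : lmodType K) (x y w z : V) (r : 'rV[K]_4) : V :=
  \sum_(i < 4) r 0 i *: [:: x; y; w; z]`_i.

Lemma gmapE (K : fieldType) (V : lmodType K) (x y w z : V) (r : 'rV[K]_4) :
  gmap x y w z r = r 0 (inord 0) *: x + r 0 (inord 1) *: y + r 0 (inord 2) *: w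
     + r 0 (inord 3) *: z.
Proof.
rewrite /gmap !big_ord_recl big_ord0 /= addr0 !addrA.
by congr (_ *: _ + _ *: _ + _ *: _ + _ *: _); congr (r 0 _); apply: val_inj;
  rewrite /= inordK.
Qed.

Lemma iso_of_free (K : fieldType) (V : vectType K) (br : V -> V -> V)
  (brW : 'rV[K]_4 -> 'rV[K]_4 -> 'rV[K]_4) (x y w z : V) :
  \dim (fullv : {vspace V}) = 4%N -> free [:: x; y; w; z] ->
  (forall r s, br (gmap x y w z r) (gmap x y w z s) = gmap x y w z (brW r s)) ->
  acaa_iso br brW.
Proof.
move=> hd hf hbr.
pose X := [tuple x; y; w; z].
have hX : free X by [].
have hB : basis_of fullv X by rewrite basisEfree hX subvf hd.
pose f (v : V) : 'rV[K]_4 := \row_i coord X i v.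
have fg : cancel (gmap x y w z) f.
  move=> r; apply/rowP => i; rewrite mxE /gmap.
  exact: (coord_sum_free (fun j => r 0 j) i hX).
have gf : cancel f (gmap x y w z).
  move=> v; rewrite /gmap [RHS](coord_basis hB (memvf v)).
  by apply: eq_bigr => i _; rewrite mxE.
exists f; split.
- by move=> a u v; apply/rowP => i; rewrite !mxE linearP.
- by exists (gmap x y w z).
- by move=> a b; rewrite -{1}(gf a) -{1}(gf b) hbr fg.
Qed.

Lemma two_step (K : fieldType) (V : vectType K) (br : V -> V -> V) :
  [pchar K] =i pred0 -> \dim (fullv : {vspace V}) = 4%N -> is_acaa br ->
  forall x y z, br x (br y z) = 0.
Proof.
move=> hc hd H x y z; have [_ _ A C] := H.
have QA := Q0 hc H.
have QB : forall p c d r, br p (br (br c d) r) = 0.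
  by move=> p c d r; rewrite (A (br c d) r) (brNr H) QA oppr0.
have QC : forall c d q r, br (br c d) (br q r) = 0.
  by move=> c d q r; rewrite C QA.
case: (eqVneq (br x (br y z)) 0) => // hv; exfalso.
set u := br y z in hv; set v := br x u in hv.
have hv' : v != 0 by [].
have lin := (brDl H, brDr H, brZl H, brZr H).
suff : free [:: x; y; z; u; v].
  by move/free_dim_le; rewrite hd.
apply: free5 => k0 k1 k2 k3 k4 E.
have E1 := congr1 (fun s => br s u) E; rewrite /= (br0l H) !lin in E1.
rewrite (Txxz hc H) (Txzx hc H) (brxx hc H) QC !scaler0 !addr0 in E1.
have h0 : k0 = 0.
  by move/eqP: E1; rewrite scaler_eq0 (negPf hv') orbF => /eqP.
have E2 := congr1 (fun s => br x (br s z)) E; rewrite /= (br0l H) (br0r H) !lin in E2.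
rewrite (Txxz hc H) (Txzz hc H) !QB !scaler0 !addr0 add0r in E2.
have h1 : k1 = 0.
  by move/eqP: E2; rewrite scaler_eq0 (negPf hv') orbF => /eqP.
have E3 := congr1 (fun s => br x (br y s)) E; rewrite /= !(br0r H) !lin in E3.
rewrite (Txzx hc H) (Txzz hc H) !QA !scaler0 !addr0 !add0r in E3.
have h2 : k2 = 0.
  by move/eqP: E3; rewrite scaler_eq0 (negPf hv') orbF => /eqP.
rewrite h0 h1 h2 !scale0r !add0r in E.
have E4 := congr1 (fun s => br x s) E; rewrite /= !(br0r H) !lin in E4.
rewrite (Txxz hc H) !scaler0 !addr0 in E4.
have h3 : k3 = 0.
  by move/eqP: E4; rewrite scaler_eq0 (negPf hv') orbF => /eqP.
rewrite h3 scale0r add0r in E.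
have h4 : k4 = 0.
  by move/eqP: E; rewrite scaler_eq0 (negPf hv') orbF => /eqP.
by [].
Qed.

Lemma span4 (K : fieldType) (V : vectType K) (a b c d : V) :
  \dim (fullv : {vspace V}) = 4%N -> free [:: a; b; c; d] ->
  forall v, exists k0 k1 k2 k3 : K, v = k0 *: a + k1 *: b + k2 *: c + k3 *: d.
Proof.
move=> hd hf v.
pose X := [tuple a; b; c; d].
have hX : free X by [].
have hB : basis_of fullv X by rewrite basisEfree hX subvf hd.
have := coord_basis hB (memvf v).
rewrite !big_ord_recl big_ord0 /= addr0 !addrA => ->.
by do 4 eexists.
Qed.

Lemma line_lemma (K : fieldType) (V : lmodType K) (p w tx ty t x y : V) (a b c d : K) :
  w != 0 -> p = c *: t + a *: x + b *: y + d *: w ->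
  c *: tx - b *: w = 0 -> c *: ty + a *: w = 0 -> (tx = - p \/ ty = - p) ->
  exists l : K, p = l *: w.
Proof.
move=> hw hp EX EY hs.
case: (eqVneq c 0) => hc.
  rewrite hc !scale0r !add0r in EX EY.
  move/eqP: EY; rewrite scaler_eq0 (negPf hw) orbF => /eqP ha.
  move/eqP: EX; rewrite oppr_eq0 scaler_eq0 (negPf hw) orbF => /eqP hb.
  by exists d; rewrite hp hc ha hb !scale0r !add0r.
case: hs => hs.
  rewrite hs in EX.
  exists (- (c^-1 * b)); rewrite scaleNr -scalerA -scalerN; apply: (canRL (scalerK hc)).
  by move/eqP: EX; rewrite subr_eq0 scalerN eqr_oppLR => /eqP.
rewrite hs in EY.
exists (c^-1 * a); rewrite -scalerA; apply: (canRL (scalerK hc)).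
by move/eqP: EY; rewrite scalerN addrC subr_eq0 eq_sym => /eqP.
Qed.

Theorem mainTheorem4 (K : fieldType) (V : vectType K)
  (br : V -> V -> V) :
  [pchar K] =i pred0 ->
  (\dim (fullv : {vspace V}) = 4)%N ->
  is_acaa br ->
  acaa_iso br (@abelian4_br K) \/ acaa_iso br (@heis4_br K).
Proof.
move=> hc hd H; have [_ _ A C] := H.
have TS := two_step hc hd H.
have lin := (brDl H, brDr H, brZl H, brZr H, brNl H, brNr H).
have Wl : forall c d q, br (br c d) q = 0.
  by move=> c d q; rewrite A TS oppr0.
case: (classic (forall a b, br a b = 0)) => [h0 | hn].
  left.
  have := ext_free (nil_free V); rewrite hd => /(_ isT) [t1 f1].
  have := ext_free f1; rewrite hd => /(_ isT) [t2 f2].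
  have := ext_free f2; rewrite hd => /(_ isT) [t3 f3].
  have := ext_free f3; rewrite hd => /(_ isT) [t4 f4].
  apply: (iso_of_free hd f4) => r s.
  by rewrite h0 /abelian4_br gmapE !mxE !scale0r !addr0.
right.
have [a hn'] := not_all_ex_not _ _ hn.
have [b hab] := not_all_ex_not _ _ hn'.
have hw : br a b != 0 by apply/eqP.
have f3 : free [:: a; b; br a b].
  apply: free3 => k0 k1 k2 E.
  have E1 := congr1 (fun s => br s b) E.
  rewrite /= (br0l H) !lin (brxx hc H) Wl !scaler0 !addr0 in E1.
  have h0 : k0 = 0.
    by move/eqP: E1; rewrite scaler_eq0 (negPf hw) orbF => /eqP.
  have E2 := congr1 (fun s => br a s) E.
  rewrite /= (br0r H) !lin (brxx hc H) TS !scaler0 !addr0 add0r in E2.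
  have h1 : k1 = 0.
    by move/eqP: E2; rewrite scaler_eq0 (negPf hw) orbF => /eqP.
  rewrite h0 h1 !scale0r !add0r in E.
  split => //.
  by move/eqP: E; rewrite scaler_eq0 (negPf hw) orbF => /eqP.
have := ext_free f3; rewrite hd => /(_ isT) [t ft].
have [c1 [a1 [b1 [d1 hp]]]] := span4 hd ft (br a t).
have [l1 hl1] : exists l, br a t = l *: br a b.
  apply: (line_lemma (tx := br t a) (ty := br t b) hw hp).
  - have := congr1 (fun s => br s a) hp.
    rewrite /= Wl !lin (brxx hc H) Wl (A b a) !scaler0 !addr0 scalerN => <-.
    done.
  - have := congr1 (fun s => br s b) hp.
    rewrite /= Wl !lin (brxx hc H) Wl !scaler0 !addr0 => <-.
    done.
  - by left; rewrite A.
have [c2 [a2 [b2 [d2 hq]]]] := span4 hd ft (br b t).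
have [l2 hl2] : exists l, br b t = l *: br a b.
  apply: (line_lemma (tx := br t a) (ty := br t b) hw hq).
  - have := congr1 (fun s => br s a) hq.
    rewrite /= Wl !lin (brxx hc H) Wl (A b a) !scaler0 !addr0 scalerN => <-.
    done.
  - have := congr1 (fun s => br s b) hq.
    rewrite /= Wl !lin (brxx hc H) Wl !scaler0 !addr0 => <-.
    done.
  - by right; rewrite A.
have [z [hxz [hyz hzt]]] : exists z,
    [/\ br a z = 0, br b z = 0 & t = (z + l1 *: b) - l2 *: a].
  exists (t + l2 *: a - l1 *: b); split.
  - by rewrite !lin hl1 (brxx hc H) scaler0 addr0 subrr.
  - by rewrite !lin hl2 (A b a) (brxx hc H) scaler0 subr0 scalerN subrr.
  - by rewrite subrK addrK.
have hzx : br z a = 0 by rewrite A hxz oppr0.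
have hzy : br z b = 0 by rewrite A hyz oppr0.
have f4 : free [:: a; b; br a b; z].
  apply: free4 => k0 k1 k2 k3 E.
  have E1 := congr1 (fun s => br s b) E.
  rewrite /= (br0l H) !lin (brxx hc H) Wl hzy !scaler0 !addr0 in E1.
  have h0 : k0 = 0.
    by move/eqP: E1; rewrite scaler_eq0 (negPf hw) orbF => /eqP.
  have E2 := congr1 (fun s => br a s) E.
  rewrite /= (br0r H) !lin (brxx hc H) TS hxz !scaler0 !addr0 add0r in E2.
  have h1 : k1 = 0.
    by move/eqP: E2; rewrite scaler_eq0 (negPf hw) orbF => /eqP.
  rewrite h0 h1 !scale0r !add0r in E.
  have h3 : k3 = 0.
    apply/eqP; apply/negP => /negP hk3.
    move: ft; rewrite free_cons => /andP[/negP nt _]; apply: nt.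
    have hz : z = k3^-1 *: - (k2 *: br a b).
      apply: (canRL (scalerK hk3)); apply/eqP; rewrite -addr_eq0 addrC; exact/eqP.
    have mem : forall v, v \in [:: a; b; br a b] -> v \in <<[:: a; b; br a b]>>%VS.
      by move=> v; apply: memv_span.
    rewrite hzt hz; apply: rpredB; [apply: rpredD|]; apply: rpredZ => //.
    - by rewrite memvN; apply: rpredZ; apply: mem; rewrite !inE eqxx !orbT.
    - by apply: mem; rewrite !inE eqxx !orbT.
    - by apply: mem; rewrite !inE eqxx.
  rewrite h3 scale0r addr0 in E.
  split => //.
  by move/eqP: E; rewrite scaler_eq0 (negPf hw) orbF => /eqP.
apply: (iso_of_free hd f4) => r s.
rewrite !gmapE !lin !(brxx hc H) !Wl !TS hxz hyz hzx hzy (A b a).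
rewrite /heis4_br !mxE !inordK //=.
by rewrite !scaler0 !scale0r !addr0 !add0r !scalerN !scalerA scalerBl.
Qed.
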